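(* Let $0<\theta<\tfrac12$, $\alpha>0$, $\beta\in\mathbb{R}$, and let $0\le\phi\le 1$ be smooth with compact support in $[1,2]$. Then $$\sum_{\ell\in\mathbb{Z}}|M_\theta(\tfrac12+i(\alpha\ell+\beta))|^2\phi\Big(\frac{\ell}{T}\Big)\ll T\log T.$$
   Context: $M_\theta(s)=\sum_{n\le T^{\theta}}\frac{\mu(n)}{n^s}\big(1-\frac{\log n}{\log T^{\theta}}\big)$ with $\mu$ the Möbius function. *)

(* Defs.v *)
From Stdlib Require Import Reals ZArith List Bool.
From mathcomp Require prime.
Open Scope R_scope.

Definition squarefreeb (n : nat) : bool :=
  Nat.ltb 0 n &&
  forallb (fun p => Nat.eqb (mathcomp.boot.prime.logn p n) 1)
          (mathcomp.boot.prime.primes n).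

Definition mobius (n : nat) : Z :=
  if squarefreeb n then ((-1) ^ Z.of_nat (length (mathcomp.boot.prime.primes n)))%Z
  else 0%Z.

(* Coefficient of n^{-s} in M_theta:  mu(n) (1 - log n / log T^theta)
   for 1 <= n <= T^theta, and 0 otherwise. *)
Definition Mcoef (theta T : R) (n : nat) : R :=
  if Rle_dec (INR n) (Rpower T theta) then
    IZR (mobius n) * (1 - ln (INR n) / ln (Rpower T theta))
  else 0.

(* Upper bound for the range of n (every n <= T^theta lies in 1..Mlen). *)
Definition Mlen (theta T : R) : nat := Z.to_nat (up (Rpower T theta)).

(* M_theta(1/2 + i t) = sum_n c_n n^{-1/2} e^{-i t log n}; its real and
   imaginary parts, written out. *)
Definition M_re (theta T t : R) : R :=
  fold_right Rplus 0
    (map (fun n => Mcoef theta T n * Rpower (INR n) (-/2) * cos (t * ln (INR n)))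
         (seq 1 (Mlen theta T))).

Definition M_im (theta T t : R) : R :=
  fold_right Rplus 0
    (map (fun n => - (Mcoef theta T n * Rpower (INR n) (-/2) * sin (t * ln (INR n))))
         (seq 1 (Mlen theta T))).

Definition M_abs2 (theta T t : R) : R := (M_re theta T t)^2 + (M_im theta T t)^2.

Definition smooth (f : R -> R) : Prop :=
  exists D : nat -> R -> R,
    D 0%nat = f /\ forall (k : nat) (x : R), derivable_pt_lim (D k) x (D (S k) x).

Definition sym_sum (N : nat) (F : Z -> R) : R :=
  fold_right Rplus 0
    (map (fun k => F (Z.of_nat k - Z.of_nat N)%Z) (seq 0 (2 * N + 1))).

(* Main.v *)
Require Import Defs.
From Stdlib Require Import Reals ZArith List Lra Lia.
Open Scope R_scope.


Definition lsum {A : Type} (f : A -> R) (s : list A) : R := fold_right Rplus 0 (map f s).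

Lemma lsum_nil {A} (f : A -> R) : lsum f nil = 0. Proof. reflexivity. Qed.
Lemma lsum_cons {A} (f : A -> R) x s : lsum f (x :: s) = f x + lsum f s. Proof. reflexivity. Qed.
Lemma lsum_app {A} (f : A -> R) s t : lsum f (s ++ t) = lsum f s + lsum f t.
Proof. induction s; simpl; [rewrite lsum_nil; ring|]. rewrite !lsum_cons, IHs. ring. Qed.

Lemma lsum_ext {A} (f g : A -> R) s : (forall x, In x s -> f x = g x) -> lsum f s = lsum g s.
Proof. induction s; intros H; [reflexivity|]. rewrite !lsum_cons, H, IHs; auto.
  intros; apply H; simpl; auto. simpl; auto. Qed.

Lemma lsum_le {A} (f g : A -> R) s : (forall x, In x s -> f x <= g x) -> lsum f s <= lsum g s.
Proof. induction s; intros H; [unfold lsum; simpl; lra|]. rewrite !lsum_cons.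
  apply Rplus_le_compat; [apply H; simpl; auto|apply IHs; intros; apply H; simpl; auto]. Qed.

Lemma lsum_nonneg {A} (f : A -> R) s : (forall x, In x s -> 0 <= f x) -> 0 <= lsum f s.
Proof. intros H. replace 0 with (lsum (fun _ => 0) s). apply lsum_le; auto.
  induction s; simpl; auto. unfold lsum in *; simpl. rewrite IHs; [ring|]. intros; apply H; simpl; auto. Qed.

Lemma lsum_plus {A} (f g : A -> R) s : lsum (fun x => f x + g x) s = lsum f s + lsum g s.
Proof. induction s; simpl; [unfold lsum; simpl; ring|]. rewrite !lsum_cons, IHs. ring. Qed.

Lemma lsum_scal {A} (c : R) (f : A -> R) s : lsum (fun x => c * f x) s = c * lsum f s.
Proof. induction s; [unfold lsum; simpl; ring|]. rewrite !lsum_cons, IHs. ring. Qed.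

Lemma lsum_scal_r {A} (c : R) (f : A -> R) s : lsum (fun x => f x * c) s = lsum f s * c.
Proof. induction s; [unfold lsum; simpl; ring|]. rewrite !lsum_cons, IHs. ring. Qed.

Lemma lsum_abs {A} (f : A -> R) s : Rabs (lsum f s) <= lsum (fun x => Rabs (f x)) s.
Proof. induction s; [unfold lsum; simpl; rewrite Rabs_R0; lra|]. rewrite !lsum_cons.
  eapply Rle_trans; [apply Rabs_triang|]. lra. Qed.

Lemma lsum_swap {A B} (f : A -> B -> R) s t :
  lsum (fun x => lsum (fun y => f x y) t) s = lsum (fun y => lsum (fun x => f x y) s) t.
Proof. induction s.
  - unfold lsum at 1. simpl. symmetry. replace 0 with (lsum (fun _:B => 0) t).
    apply lsum_ext; intros; reflexivity. induction t; [reflexivity|]. rewrite lsum_cons, IHt; ring.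
  - rewrite lsum_cons, IHs, <- lsum_plus. apply lsum_ext; intros. rewrite lsum_cons; ring. Qed.

Lemma lsum_mul {A B} (f : A -> R) (g : B -> R) s t :
  lsum f s * lsum g t = lsum (fun x => lsum (fun y => f x * g y) t) s.
Proof. rewrite <- lsum_scal_r. apply lsum_ext; intros. rewrite lsum_scal. reflexivity. Qed.

Lemma lsum_const_le {A} (f : A -> R) c s : (forall x, In x s -> f x <= c) -> lsum f s <= c * INR (length s).
Proof. induction s; intros H; [unfold lsum; simpl; lra|]. rewrite lsum_cons.
  simpl length. rewrite S_INR. assert (f a <= c) by (apply H; simpl; auto).
  assert (lsum f s <= c * INR (length s)) by (apply IHs; intros; apply H; simpl; auto). lra. Qed.

Lemma lsum_inj {A} (f : A -> R) (g : A -> nat) (c : nat -> R) (P : A -> Prop) (s : list A) :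
  NoDup s ->
  (forall x, In x s -> f x <= 0 \/ P x) ->
  (forall x y, In x s -> In y s -> P x -> P y -> g x = g y -> x = y) ->
  forall r : list nat, NoDup r -> (forall j, In j r -> 0 <= c j) ->
  (forall x, In x s -> P x -> In (g x) r /\ f x <= c (g x)) ->
  lsum f s <= lsum c r.
Proof.
  induction s as [|a s IH]; intros Hnd Hor Hinj r Hr Hc Hm.
  - unfold lsum at 1; simpl. apply lsum_nonneg; auto.
  - inversion Hnd as [|? ? Hna Hnd']; subst. rewrite lsum_cons.
    destruct (Hor a (or_introl eq_refl)) as [Hf|Hp].
    + assert (lsum f s <= lsum c r).
      { apply IH; auto. intros; apply Hor; simpl; auto. intros; apply Hinj; simpl; auto.
        intros; apply Hm; simpl; auto. }
      lra.
    + destruct (Hm a (or_introl eq_refl) Hp) as [Hin Hfa].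
      destruct (in_split _ _ Hin) as [r1 [r2 Er]]. subst r.
      rewrite lsum_app, lsum_cons.
      assert (lsum f s <= lsum c (r1 ++ r2)).
      { apply IH; auto. intros; apply Hor; simpl; auto. intros; apply Hinj; simpl; auto.
        apply NoDup_remove_1 in Hr; auto.
        intros j Hj; apply Hc. apply in_app_or in Hj; apply in_or_app; simpl; tauto.
        intros x Hx Hpx. destruct (Hm x (or_intror Hx) Hpx) as [Hg Hfx]. split; auto.
        apply in_app_or in Hg. apply in_or_app. destruct Hg as [Hg|[Hg|Hg]]; auto.
        exfalso. apply Hna. assert (x = a) by (apply Hinj; simpl; auto). subst; auto. }
      rewrite lsum_app in H. lra.
Qed.


Lemma sin_half_lb a : 0 <= a <= 1 -> a/2 <= sin a.
Proof. intros. assert (H1: a <= PI) by (pose proof PI2_1; lra).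
destruct (SIN a (proj1 H) H1) as [H2 _]. eapply Rle_trans; [|exact H2].
assert (E: sin_lb a = a - a^3/6 + a^5/120 - a^7/5040).
{ unfold sin_lb, sin_approx, sin_term. simpl. field. }
rewrite E. assert (0 <= a^2 <= 1) by nra.
assert (0 <= a^4 <= 1) by nra. assert (0<= a^6 <= 1) by nra. nra. Qed.

Lemma exp_le x y : x <= y -> exp x <= exp y.
Proof. intros [H|H]; [left; apply exp_increasing; auto|subst; lra]. Qed.

Lemma ln_le x y : 0 < x -> x <= y -> ln x <= ln y.
Proof. intros H [H1|H1]; [left; apply ln_increasing; auto|subst; lra]. Qed.

Lemma ln_le_sub1 y : 0 < y -> ln y <= y - 1.
Proof. intros. pose proof (exp_ineq1_le (ln y)). rewrite exp_ln in H0; lra. Qed.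

Lemma ln_gap a b : 0 < a -> a <= b -> (b - a) / b <= ln b - ln a.
Proof. intros. assert (0 < b) by lra.
  assert (0 < a / b) by (apply Rdiv_lt_0_compat; auto).
  pose proof (ln_le_sub1 (a / b) H2). unfold Rdiv in H3.
  rewrite ln_mult, ln_Rinv in H3 by (try apply Rinv_0_lt_compat; auto). replace ((b - a)/b) with (-(a/b - 1)) by (field; lra). lra. Qed.

Lemma harmonic M : (1 <= M)%nat -> lsum (fun n => / INR n) (seq 1 M) <= 1 + ln (INR M).
Proof. induction M as [|M IH]; intros HM; [lia|].
  destruct (Nat.eq_dec M 0) as [->|HM0].
  - unfold lsum; simpl. rewrite ln_1. lra.
  - rewrite seq_S, lsum_app, lsum_cons, lsum_nil.
    assert (IH' := IH ltac:(lia)).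
    replace (1 + M)%nat with (S M) by lia.
    assert (0 < INR M) by (apply lt_0_INR; lia).
    pose proof (ln_gap (INR M) (INR (S M)) H ltac:(rewrite S_INR; lra)).
    rewrite S_INR in *. replace ((INR M + 1 - INR M) / (INR M + 1)) with (/(INR M + 1)) in H0 by (field; lra).
    lra. Qed.

Lemma geom_sum g Rn : 0 < g -> lsum (fun j => exp (- g * INR j)) (seq 0 Rn) <= / (1 - exp (- g)).
Proof. intros Hg.
  assert (Hq : exp (-g) < 1) by (rewrite <- exp_0; apply exp_increasing; lra).
  assert (Hq0 : 0 < exp (-g)) by apply exp_pos.
  assert (E: forall nn : nat, (1 - exp (-g)) * lsum (fun j => exp (- g * INR j)) (seq 0 nn) = 1 - exp (-g * INR nn)).
  { induction nn. unfold lsum; simpl. rewrite (Rmult_0_r (-g)), exp_0; ring.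
    rewrite seq_S, lsum_app, lsum_cons, lsum_nil. rewrite Rmult_plus_distr_l, IHnn.
    simpl (0 + nn)%nat. rewrite S_INR. replace (-g * (INR nn + 1)) with (-g * INR nn + -g) by ring.
    rewrite exp_plus. ring. }
  specialize (E Rn). pose proof (exp_pos (-g * INR Rn)).
  apply (Rmult_le_reg_l (1 - exp (-g))); [lra|]. rewrite E. rewrite Rinv_r; lra. Qed.

Lemma cos_sum_id K c x : 2 * sin (x/2) * lsum (fun j => cos (c + INR j * x)) (seq 0 K)
  = sin (c + (INR K - /2) * x) - sin (c - x/2).
Proof. induction K.
  - unfold lsum; simpl. replace (c + (0 - /2) * x) with (c - x/2) by field. ring.
  - rewrite seq_S, lsum_app, lsum_cons, lsum_nil, Rmult_plus_distr_l, IHK.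
    simpl (0 + K)%nat. rewrite S_INR.
    replace (c + (INR K + 1 - /2) * x) with ((c + INR K * x) + x/2) by field.
    replace (c + (INR K - /2) * x) with ((c + INR K * x) - x/2) by field.
    rewrite sin_plus, sin_minus. ring. Qed.

Lemma cos_sum_bound1 K c x : sin (x/2) <> 0 ->
  Rabs (lsum (fun j => cos (c + INR j * x)) (seq 0 K)) <= / Rabs (sin (x/2)).
Proof. intros Hs. pose proof (cos_sum_id K c x) as E.
  set (S := lsum _ _) in *.
  assert (Rabs (2 * sin (x/2) * S) <= 2).
  { rewrite E. eapply Rle_trans; [apply Rabs_triang|]. rewrite Rabs_Ropp.
    assert (Hb: forall y, Rabs (sin y) <= 1) by (intros; apply Rabs_le; apply SIN_bound).
    pose proof (Hb (c + (INR K - /2) * x)). pose proof (Hb (c - x/2)). lra. }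
  rewrite !Rabs_mult in H. rewrite Rabs_right in H by lra.
  assert (0 < Rabs (sin (x/2))) by (apply Rabs_pos_lt; auto).
  apply (Rmult_le_reg_l (Rabs (sin (x/2)))); auto. rewrite Rinv_r by lra. nra. Qed.

Lemma cos_sum_bound2 K c x : Rabs (lsum (fun j => cos (c + INR j * x)) (seq 0 K)) <= INR K.
Proof. eapply Rle_trans; [apply lsum_abs|]. rewrite <- (length_seq K 0) at 2.
  replace (INR (length (seq 0 K))) with (1 * INR (length (seq 0 K))) by ring.
  apply lsum_const_le. intros. apply Rabs_le. apply COS_bound. Qed.

Lemma sin_shiftk d k : Rabs (sin (d + IZR k * PI)) = Rabs (sin d).
Proof. rewrite sin_plus. rewrite (sin_eq_0_1 (IZR k * PI)) by (exists k; auto).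
  assert (Hc : cos (IZR k * PI) ^ 2 = 1).
  { pose proof (sin2_cos2 (IZR k * PI)). rewrite (sin_eq_0_1 (IZR k * PI)) in H by (exists k; auto).
    unfold Rsqr in H. simpl. lra. }
  rewrite Rmult_0_r, Rplus_0_r, Rabs_mult.
  assert (Rabs (cos (IZR k * PI)) = 1).
  { rewrite <- (Rabs_right 1) by lra. apply Rsqr_eq_abs_0. unfold Rsqr. simpl in Hc. lra. }
  rewrite H. ring. Qed.


Definition zenc (k : Z) : nat := if (0 <=? k)%Z then Z.to_nat (2 * k) else Z.to_nat (- 2 * k - 1).

Lemma zenc_inj k k' : zenc k = zenc k' -> k = k'.
Proof. unfold zenc. destruct (Z.leb_spec 0 k); destruct (Z.leb_spec 0 k'); intros H1; lia. Qed.

Lemma zenc_le k : INR (zenc k) <= 2 * Rabs (IZR k).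
Proof. unfold zenc. rewrite Rabs_Zabs. destruct (Z.leb_spec 0 k).
  - rewrite INR_IZR_INZ, Z2Nat.id by lia. rewrite Z.abs_eq by lia. rewrite mult_IZR. lra.
  - rewrite INR_IZR_INZ, Z2Nat.id by lia. rewrite Z.abs_neq by lia. rewrite <- (mult_IZR 2). apply IZR_le. lia. Qed.

Lemma sin_abs_lb d e : 0 < e -> e <= Rabs d -> Rabs d <= PI/2 -> sin e <= Rabs (sin d).
Proof. intros He H1 H2. pose proof PI2_1.
  destruct (Rle_dec 0 d).
  - rewrite (Rabs_right d) in * by lra. eapply Rle_trans; [apply sin_incr_1|]. 6: apply Rle_abs. all: try lra.
  - rewrite (Rabs_left d) in * by lra. rewrite <- Rabs_Ropp, <- sin_neg.
    eapply Rle_trans; [apply sin_incr_1|]. 6: apply Rle_abs. all: try lra. Qed.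

Lemma lsum_const {A} (c : R) (s : list A) : lsum (fun _ => c) s = c * INR (length s).
Proof. induction s. unfold lsum; simpl; ring. rewrite lsum_cons, IHs. simpl length. rewrite S_INR. ring. Qed.

Lemma spacing M x y : In x (seq 1 M) -> In y (seq 1 M) -> (x < y)%nat ->
  / INR M <= ln (INR y) - ln (INR x).
Proof. intros Hx Hy Hxy. apply in_seq in Hx, Hy.
  assert (1 <= INR x) by (apply (le_INR 1); lia).
  assert (INR x + 1 <= INR y) by (rewrite <- S_INR; apply le_INR; lia).
  assert (INR y <= INR M) by (apply le_INR; lia).
  pose proof (ln_gap (INR x) (INR y) ltac:(lra) ltac:(lra)).
  eapply Rle_trans; [|exact H2]. unfold Rdiv.
  apply Rle_trans with (1 * / INR y). rewrite Rmult_1_l. apply Rinv_le_contravar; lra.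
  apply Rmult_le_compat_r. left; apply Rinv_0_lt_compat; lra. lra. Qed.

Section Inner.
Variables (alpha : R) (M K : nat) (n0 : nat) (h : nat -> R).
Hypothesis halpha : 0 < alpha.
Hypothesis hn0 : In n0 (seq 1 M).
Hypothesis hh0 : forall m, 0 <= h m.
Hypothesis hhK : forall m, h m <= INR K.
Hypothesis hhs : forall m, sin (alpha * (ln (INR m) - ln (INR n0)) / 2) <> 0 ->
   h m <= / Rabs (sin (alpha * (ln (INR m) - ln (INR n0)) / 2)).

Let eta := alpha / (4 * INR M + alpha).
Let dd m := ln (INR m) - ln (INR n0).
Let xx m := alpha * dd m / 2.
Let kk m := up (xx m / PI - / 2).
Let del m := xx m - IZR (kk m) * PI.
Let gam := PI / (4 * alpha).

Lemma del_bound m : Rabs (del m) <= PI / 2.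
Proof. unfold del, kk. pose proof (archimed (xx m / PI - /2)) as [H1 H2].
  pose proof PI_RGT_0. set (k := up _) in *.
  assert (xx m / PI = xx m * / PI) by reflexivity.
  assert (IZR k * PI > xx m - PI/2).
  { apply Rgt_lt in H1. apply (Rmult_lt_compat_r PI) in H1; auto.
    replace ((xx m / PI - /2) * PI) with (xx m - PI/2) in H1 by (field; lra). lra. }
  assert (IZR k * PI <= xx m + PI/2).
  { assert (IZR k <= xx m / PI + /2) by lra. apply (Rmult_le_compat_r PI) in H4; [|lra].
    replace ((xx m / PI + /2) * PI) with (xx m + PI/2) in H4 by (field; lra). lra. }
  apply Rabs_le; lra. Qed.

Lemma eta_pos : 0 < eta.
Proof. unfold eta. apply Rdiv_lt_0_compat; auto. pose proof (pos_INR M). lra. Qed.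

Lemma eta_lt1 : eta < 1.
Proof. unfold eta. pose proof (pos_INR M).
  destruct (Nat.eq_dec M 0). subst M; simpl in hn0; tauto.
  assert (1 <= INR M) by (apply (le_INR 1); lia).
  apply (Rmult_lt_reg_r (4 * INR M + alpha)); [lra|]. unfold Rdiv; rewrite Rmult_assoc, Rinv_l; lra. Qed.

Definition fres_def (P : Prop) (Pd : {P} + {~P}) (v : R) : R := if Pd then v else 0.

Lemma inner_bound :
  lsum (fun m => exp (- Rabs (dd m) / 2) * h m) (seq 1 M)
  <= INR K * / (1 - exp (- gam)) + INR M * (8 * INR M / alpha + 2).
Proof.
  pose proof eta_pos as Hep. pose proof eta_lt1 as Hel. pose proof PI2_1 as HPI.
  set (fres := fun m => if Rlt_dec (Rabs (del m)) eta then INR K * exp (- Rabs (dd m) / 2) else 0).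
  apply Rle_trans with (lsum (fun m => fres m + (8 * INR M / alpha + 2)) (seq 1 M)).
  { apply lsum_le. intros m Hm. unfold fres.
    assert (Hex : 0 < exp (- Rabs (dd m) / 2) <= 1).
    { split. apply exp_pos. rewrite <- exp_0. apply exp_le. pose proof (Rabs_pos (dd m)). lra. }
    assert (H2e : 0 <= 8 * INR M / alpha + 2).
    { pose proof (pos_INR M). assert (0 <= 8 * INR M / alpha) by (unfold Rdiv; apply Rmult_le_pos; [lra|left; apply Rinv_0_lt_compat; lra]). lra. }
    destruct (Rlt_dec (Rabs (del m)) eta).
    - pose proof (hhK m). pose proof (hh0 m). nra.
    - assert (Hs : sin eta <= Rabs (sin (alpha * dd m / 2))).
      { replace (alpha * dd m / 2) with (del m + IZR (kk m) * PI) by (unfold del, xx; ring).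
        rewrite sin_shiftk. apply sin_abs_lb; auto. lra. apply del_bound. }
      pose proof (sin_half_lb eta ltac:(lra)).
      assert (Hne : sin (alpha * dd m / 2) <> 0).
      { intro E. rewrite E, Rabs_R0 in Hs. lra. }
      specialize (hhs m Hne). fold (dd m) in hhs.
      assert (h m <= 2 / eta).
      { eapply Rle_trans; [exact hhs|]. replace (2 / eta) with (/ (eta / 2)) by (field; lra).
        apply Rinv_le_contravar. lra. unfold dd in Hs |- *. lra. }
      assert (2 / eta = 8 * INR M / alpha + 2) by (unfold eta; field; pose proof (pos_INR M); lra).
      pose proof (hh0 m). nra. }
  rewrite lsum_plus.
  replace (lsum (fun _ => 8 * INR M / alpha + 2) (seq 1 M)) with (INR M * (8 * INR M / alpha + 2)).
  2:{ rewrite lsum_const, length_seq. ring. }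
  apply Rplus_le_compat_r.
  set (g := fun m => zenc (kk m)).
  set (c := fun j => INR K * exp (- gam * INR j)).
  apply Rle_trans with (lsum c (seq 0 (S (list_max (map g (seq 1 M)))))).
  2:{ unfold c. rewrite lsum_scal. apply Rmult_le_compat_l. apply pos_INR.
      apply geom_sum. unfold gam. apply Rdiv_lt_0_compat; lra. }
  apply lsum_inj with (g := g) (P := fun m => Rabs (del m) < eta).
  - apply seq_NoDup.
  - intros x _. unfold fres. destruct (Rlt_dec (Rabs (del x)) eta); [right; auto|left; lra].
  - intros x y Hx Hy Px Py Hg. unfold g in Hg. apply zenc_inj in Hg.
    assert (Hd : Rabs (xx x - xx y) < 2 * eta).
    { replace (xx x - xx y) with (del x - del y) by (unfold del; rewrite Hg; ring).
      eapply Rle_lt_trans; [apply Rabs_triang|]. rewrite Rabs_Ropp. lra. }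
    assert (Hd2 : Rabs (ln (INR x) - ln (INR y)) < 4 / (4 * INR M + alpha)).
    { unfold xx, dd, eta in Hd.
      replace (alpha * (ln (INR x) - ln (INR n0)) / 2 - alpha * (ln (INR y) - ln (INR n0)) / 2)
        with ((alpha/2) * (ln (INR x) - ln (INR y))) in Hd by field.
      rewrite Rabs_mult, (Rabs_right (alpha/2)) in Hd by lra.
      replace (2 * (alpha / (4 * INR M + alpha))) with (alpha / 2 * (4 / (4 * INR M + alpha))) in Hd
        by (field; pose proof (pos_INR M); lra).
      apply (Rmult_lt_reg_l (alpha/2)). lra. exact Hd. }
    assert (HM : 1 <= INR M).
    { apply in_seq in Hx. apply (le_INR 1). lia. }
    assert (Hq : 4 / (4 * INR M + alpha) < / INR M).
    { apply (Rmult_lt_reg_r (INR M * (4 * INR M + alpha))). nra.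
      field_simplify; lra. }
    destruct (Nat.lt_total x y) as [Hl|[He|Hl]]; auto; exfalso.
    + pose proof (spacing M x y Hx Hy Hl). rewrite Rabs_minus_sym in Hd2.
      pose proof (Rle_abs (ln (INR y) - ln (INR x))). lra.
    + pose proof (spacing M y x Hy Hx Hl).
      pose proof (Rle_abs (ln (INR x) - ln (INR y))). lra.
  - apply seq_NoDup.
  - intros j _. unfold c. apply Rmult_le_pos. apply pos_INR. left; apply exp_pos.
  - intros x Hx Px. split.
    + apply in_seq. split; [lia|]. simpl.
      assert (g x <= list_max (map g (seq 1 M)))%nat.
      { assert (Hf := proj1 (list_max_le (map g (seq 1 M)) _) (le_n _)).
        rewrite Forall_forall in Hf. apply Hf. apply in_map; auto. }
      lia.
    + unfold fres, c. destruct (Rlt_dec (Rabs (del x)) eta); [|contradiction].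
      apply Rmult_le_compat_l. apply pos_INR. apply exp_le.
      pose proof (zenc_le (kk x)). fold (g x) in H.
      assert (Hk : PI * Rabs (IZR (kk x)) <= alpha * Rabs (dd x)).
      { rewrite Rabs_Zabs. pose proof PI_RGT_0.
        destruct (Z.eq_dec (Z.abs (kk x)) 0) as [E|E].
        - rewrite E. pose proof (Rabs_pos (dd x)). nra.
        - assert (1 <= IZR (Z.abs (kk x))) by (apply IZR_le; lia).
          assert (Rabs (xx x) >= IZR (Z.abs (kk x)) * PI - eta).
          { unfold del in r. rewrite <- abs_IZR in *.
            pose proof (Rabs_triang_inv (IZR (kk x) * PI) (xx x)).
            rewrite Rabs_mult, (Rabs_right PI) in H2 by lra. rewrite Rabs_minus_sym in r. rewrite abs_IZR. lra. }
          unfold xx in H2. replace (alpha * dd x / 2) with ((alpha/2) * dd x) in H2 by field.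
          rewrite Rabs_mult, (Rabs_right (alpha/2)) in H2 by lra.
          assert (alpha * Rabs (dd x) >= 2 * (IZR (Z.abs (kk x)) * PI - eta)) by lra.
          nra. }
      unfold gam.
      assert (PI / (4 * alpha) * INR (g x) <= PI / (4 * alpha) * (2 * Rabs (IZR (kk x)))).
      { apply Rmult_le_compat_l; auto. left. apply Rdiv_lt_0_compat; lra. }
      assert (PI / (4 * alpha) * (2 * Rabs (IZR (kk x))) = (PI * Rabs (IZR (kk x))) / (2 * alpha))
        by (field; lra).
      assert (PI * Rabs (IZR (kk x)) / (2 * alpha) <= Rabs (dd x) / 2).
      { apply (Rmult_le_reg_l (2 * alpha)). lra. field_simplify; lra. }
      lra.
Qed.
End Inner.

Definition acoef th T n := Mcoef th T n * Rpower (INR n) (- / 2).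
Lemma M_abs2_expand th T t : M_abs2 th T t =
  lsum (fun m => lsum (fun n => acoef th T m * acoef th T n * cos (t * ln (INR m) - t * ln (INR n)))
    (seq 1 (Mlen th T))) (seq 1 (Mlen th T)).
Proof.
  unfold M_abs2, M_re, M_im.
  change (fold_right Rplus 0 (map ?f ?s)) with (lsum f s).
  set (L := seq 1 (Mlen th T)).
  rewrite <- !Rsqr_pow2. unfold Rsqr. rewrite !lsum_mul, <- lsum_plus.
  apply lsum_ext; intros m _. rewrite <- lsum_plus. apply lsum_ext; intros n _.
  rewrite cos_minus. unfold acoef. ring.
Qed.
Lemma mobius_abs n : Rabs (IZR (mobius n)) <= 1.
Proof. unfold mobius. destruct (squarefreeb n); [|rewrite Rabs_R0; lra].
  rewrite Rabs_Zabs, Z.abs_pow. simpl (Z.abs (-1)). rewrite Z.pow_1_l by lia. simpl; lra. Qed.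

Lemma lnT_pos T : 1 < T -> 0 < ln T.
Proof. intros. rewrite <- ln_1. apply ln_increasing; lra. Qed.

Lemma Mcoef_abs th T n : 1 < T -> 0 < th -> (1 <= n)%nat -> Rabs (Mcoef th T n) <= 1.
Proof. intros HT Hth Hn. unfold Mcoef. destruct (Rle_dec (INR n) (Rpower T th)) as [Hle|_];
  [|rewrite Rabs_R0; lra].
  assert (Hl : ln (Rpower T th) = th * ln T) by (unfold Rpower; apply ln_exp).
  pose proof (lnT_pos T HT).
  assert (1 <= INR n) by (apply (le_INR 1); auto).
  assert (0 <= ln (INR n)) by (rewrite <- ln_1; apply ln_le; lra).
  assert (ln (INR n) <= ln (Rpower T th)) by (apply ln_le; lra).
  rewrite Hl in *. assert (0 < th * ln T) by (apply Rmult_lt_0_compat; auto).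
  assert (0 <= ln (INR n) / (th * ln T) <= 1).
  { split. apply Rmult_le_pos; auto. left; apply Rinv_0_lt_compat; auto.
    apply (Rmult_le_reg_r (th * ln T)); auto. unfold Rdiv; rewrite Rmult_assoc, Rinv_l; lra. }
  rewrite Rabs_mult. pose proof (mobius_abs n).
  rewrite (Rabs_right (1 - _)) by lra. pose proof (Rabs_pos (IZR (mobius n))). nra. Qed.

Lemma acoef_bound th T n : 1 < T -> 0 < th -> (1 <= n)%nat ->
  Rabs (acoef th T n) <= exp (- ln (INR n) / 2).
Proof. intros. unfold acoef, Rpower. rewrite Rabs_mult, (Rabs_right (exp _)) by (left; apply exp_pos).
  replace (- / 2 * ln (INR n)) with (- ln (INR n) / 2) by field.
  pose proof (Mcoef_abs th T n H H0 H1). pose proof (exp_pos (- ln (INR n) / 2)). nra. Qed.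

Lemma exp_pair x y : exp (- x / 2) * exp (- y / 2) <= (exp (- x) + exp (- y)) * exp (- Rabs (x - y) / 2).
Proof. pose proof (exp_pos (-x)). pose proof (exp_pos (-y)). pose proof (exp_pos (- Rabs (x - y) / 2)).
  rewrite <- exp_plus. destruct (Rle_dec y x).
  - rewrite Rabs_right by lra. rewrite Rmult_plus_distr_r, (Rmult_comm (exp (-y))) , <- (exp_plus _ (-y)).
    replace (- (x - y) / 2 + - y) with (- x / 2 + - y / 2) by field. match goal with |- _ <= ?p * ?q + _ => assert (0 < p*q) by (apply Rmult_lt_0_compat; apply exp_pos) | |- _ <= _ + ?p * ?q => assert (0 < p*q) by (apply Rmult_lt_0_compat; apply exp_pos) end; lra.
  - rewrite Rabs_left by lra. rewrite Rmult_plus_distr_r, <- (exp_plus (-x)).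
    replace (- x + - - (x - y) / 2) with (- x / 2 + - y / 2) by field. match goal with |- _ <= ?p * ?q + _ => assert (0 < p*q) by (apply Rmult_lt_0_compat; apply exp_pos) | |- _ <= _ + ?p * ?q => assert (0 < p*q) by (apply Rmult_lt_0_compat; apply exp_pos) end; lra. Qed.

Section Window.
Variables (th T alpha beta : R) (A : Z) (K : nat).
Hypotheses (HT : 1 < T) (Hth : 0 < th) (Hal : 0 < alpha) (HM : (1 <= Mlen th T)%nat).
Let M := Mlen th T.
Let L := seq 1 M.
Let a := acoef th T.
Let Sm m n := lsum (fun j => cos ((alpha * IZR A + beta) * (ln (INR m) - ln (INR n))
      + INR j * (alpha * (ln (INR m) - ln (INR n))))) (seq 0 K).
Let E m n := exp (- Rabs (ln (INR m) - ln (INR n)) / 2) * Rabs (Sm m n).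
Let B := INR K * / (1 - exp (- (PI / (4 * alpha)))) + INR M * (8 * INR M / alpha + 2).

Lemma step1 : lsum (fun j => M_abs2 th T (alpha * IZR (A + Z.of_nat j) + beta)) (seq 0 K)
  = lsum (fun m => lsum (fun n => a m * a n * Sm m n) L) L.
Proof.
  rewrite (lsum_ext _ (fun j => lsum (fun m => lsum (fun n => a m * a n *
     cos ((alpha * IZR (A + Z.of_nat j) + beta) * ln (INR m) - (alpha * IZR (A + Z.of_nat j) + beta) * ln (INR n))) L) L)).
  2:{ intros. apply M_abs2_expand. }
  rewrite lsum_swap. apply lsum_ext; intros m _. rewrite lsum_swap. apply lsum_ext; intros n _.
  unfold Sm. rewrite <- lsum_scal. apply lsum_ext; intros j _. f_equal. f_equal.
  rewrite plus_IZR, <- INR_IZR_INZ. ring. Qed.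

Lemma step2 : lsum (fun m => lsum (fun n => a m * a n * Sm m n) L) L <=
  lsum (fun m => lsum (fun n => (exp (- ln (INR m)) + exp (- ln (INR n))) * E m n) L) L.
Proof. apply lsum_le; intros m Hm; apply lsum_le; intros n Hn.
  apply in_seq in Hm, Hn.
  eapply Rle_trans; [apply Rle_abs|]. rewrite !Rabs_mult.
  pose proof (acoef_bound th T m HT Hth ltac:(lia)). pose proof (acoef_bound th T n HT Hth ltac:(lia)).
  fold a in H, H0. pose proof (Rabs_pos (a m)). pose proof (Rabs_pos (a n)). pose proof (Rabs_pos (Sm m n)).
  unfold E. rewrite <- Rmult_assoc.
  apply Rmult_le_compat_r; auto. eapply Rle_trans; [|apply exp_pair].
  apply Rmult_le_compat; auto. Qed.

Lemma Sm_K m n : Rabs (Sm m n) <= INR K.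
Proof. unfold Sm. apply cos_sum_bound2. Qed.

Lemma Sm_sin m n : sin (alpha * (ln (INR m) - ln (INR n)) / 2) <> 0 ->
  Rabs (Sm m n) <= / Rabs (sin (alpha * (ln (INR m) - ln (INR n)) / 2)).
Proof. intros. unfold Sm. apply cos_sum_bound1. auto. Qed.

Lemma B_nonneg : 0 <= B.
Proof. unfold B. pose proof (pos_INR K). pose proof (pos_INR M).
  assert (exp (- (PI / (4 * alpha))) < 1).
  { rewrite <- exp_0. apply exp_increasing. pose proof PI_RGT_0.
    assert (0 < PI / (4 * alpha)) by (apply Rdiv_lt_0_compat; lra). lra. }
  assert (0 < / (1 - exp (- (PI / (4 * alpha))))) by (apply Rinv_0_lt_compat; lra).
  assert (0 <= 8 * INR M / alpha) by (unfold Rdiv; apply Rmult_le_pos; [lra|left; apply Rinv_0_lt_compat; lra]).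
  nra. Qed.

Lemma inner1 m : In m L -> lsum (fun n => E m n) L <= B.
Proof. intros Hm. unfold E.
  rewrite (lsum_ext _ (fun n => exp (- Rabs (ln (INR n) - ln (INR m)) / 2) * Rabs (Sm m n))).
  2:{ intros. rewrite Rabs_minus_sym. reflexivity. }
  apply (inner_bound alpha M K m (fun n => Rabs (Sm m n))); auto.
  - intros; apply Rabs_pos.
  - intros; apply Sm_K.
  - intros n Hs. assert (Eq : alpha * (ln (INR n) - ln (INR m)) / 2 = - (alpha * (ln (INR m) - ln (INR n)) / 2)) by field.
    rewrite Eq in *. rewrite sin_neg, Rabs_Ropp in *. apply Sm_sin. intro E0. apply Hs. rewrite E0. ring. Qed.

Lemma inner2 n : In n L -> lsum (fun m => E m n) L <= B.
Proof. intros Hn. unfold E.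
  apply (inner_bound alpha M K n (fun m => Rabs (Sm m n))); auto.
  - intros; apply Rabs_pos.
  - intros; apply Sm_K.
  - intros m Hs. apply Sm_sin; auto. Qed.

Lemma harm_exp : lsum (fun m => exp (- ln (INR m))) L <= 1 + ln (INR M).
Proof. eapply Rle_trans; [|apply harmonic; auto]. right. apply lsum_ext. intros m Hm.
  apply in_seq in Hm. rewrite exp_Ropp, exp_ln; auto. apply lt_0_INR; lia. Qed.

Lemma step3 : lsum (fun m => lsum (fun n => (exp (- ln (INR m)) + exp (- ln (INR n))) * E m n) L) L
  <= 2 * B * (1 + ln (INR M)).
Proof.
  rewrite (lsum_ext _ (fun m => exp (- ln (INR m)) * lsum (fun n => E m n) L + lsum (fun n => exp (- ln (INR n)) * E m n) L)).
  2:{ intros m _. rewrite <- lsum_scal, <- lsum_plus. apply lsum_ext; intros; ring. }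
  rewrite lsum_plus, lsum_swap.
  rewrite (lsum_ext (fun n => lsum (fun m => exp (- ln (INR n)) * E m n) L) (fun n => exp (- ln (INR n)) * lsum (fun m => E m n) L)).
  2:{ intros; apply lsum_scal. }
  assert (forall (F : nat -> R), (forall m, In m L -> F m <= B) ->
     lsum (fun m => exp (- ln (INR m)) * F m) L <= B * (1 + ln (INR M))).
  { intros F HF. eapply Rle_trans with (lsum (fun m => B * exp (- ln (INR m))) L).
    apply lsum_le; intros. rewrite Rmult_comm. apply Rmult_le_compat_r. left; apply exp_pos. auto.
    rewrite lsum_scal. apply Rmult_le_compat_l. apply B_nonneg. apply harm_exp. }
  pose proof (H _ inner1). pose proof (H _ inner2). lra. Qed.

Lemma window_bound : lsum (fun j => M_abs2 th T (alpha * IZR (A + Z.of_nat j) + beta)) (seq 0 K)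
  <= 2 * B * (1 + ln (INR M)).
Proof. rewrite step1. eapply Rle_trans; [apply step2|apply step3]. Qed.
End Window.


Lemma M_abs2_nonneg th T t : 0 <= M_abs2 th T t.
Proof. unfold M_abs2. pose proof (pow2_ge_0 (M_re th T t)). pose proof (pow2_ge_0 (M_im th T t)). lra. Qed.

Lemma sym_reduce th T alpha beta (phi : R -> R) N :
  1 < T -> (forall x, 0 <= phi x <= 1) -> (forall x, (x < 1 \/ 2 < x) -> phi x = 0) ->
  sym_sum N (fun l => M_abs2 th T (alpha * IZR l + beta) * phi (IZR l / T))
  <= lsum (fun j => M_abs2 th T (alpha * IZR ((up T - 1)%Z + Z.of_nat j) + beta))
          (seq 0 (Z.to_nat (up (2 * T) - (up T - 1)))).
Proof. intros HT Hr Hs.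
  set (A := (up T - 1)%Z).
  change (sym_sum N ?F) with (lsum (fun k => F (Z.of_nat k - Z.of_nat N)%Z) (seq 0 (2 * N + 1))).
  pose proof (archimed T) as [Hu1 Hu2]. pose proof (archimed (2 * T)) as [Hv1 Hv2].
  apply lsum_inj with (g := fun k => Z.to_nat (Z.of_nat k - Z.of_nat N - A))
    (P := fun k => (A <= Z.of_nat k - Z.of_nat N < up (2 * T))%Z).
  - apply seq_NoDup.
  - intros k _. set (l := (Z.of_nat k - Z.of_nat N)%Z).
    destruct (Z_lt_le_dec l A) as [Hl|Hl].
    + left. rewrite Hs. lra. left. unfold A in Hl.
      assert (IZR l <= IZR (up T) - 2) by (rewrite <- (minus_IZR _ 2); apply IZR_le; lia).
      apply (Rmult_lt_reg_r T). lra. unfold Rdiv. rewrite Rmult_assoc, Rinv_l; lra.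
    + destruct (Z_lt_le_dec l (up (2 * T))) as [Hl2|Hl2]; [right; unfold l in *; lia|].
      left. rewrite Hs. lra. right. apply IZR_le in Hl2.
      apply (Rmult_lt_reg_r T). lra. unfold Rdiv. rewrite Rmult_assoc, Rinv_l; lra.
  - intros x y _ _ Px Py Hg. apply Nat2Z.inj. apply (f_equal Z.of_nat) in Hg.
    rewrite !Z2Nat.id in Hg by lia. lia.
  - apply seq_NoDup.
  - intros; apply M_abs2_nonneg.
  - intros k _ Pk. split.
    + apply in_seq. lia.
    + rewrite Z2Nat.id by lia. replace (A + (Z.of_nat k - Z.of_nat N - A))%Z with (Z.of_nat k - Z.of_nat N)%Z by lia.
      pose proof (M_abs2_nonneg th T (alpha * IZR (Z.of_nat k - Z.of_nat N) + beta)).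
      pose proof (Hr (IZR (Z.of_nat k - Z.of_nat N) / T)). nra.
Qed.

Theorem mainTheorem9 (theta alpha beta : R) (phi : R -> R)
  (htheta : 0 < theta < /2) (halpha : 0 < alpha)
  (hsmooth : smooth phi)
  (hrange : forall x, 0 <= phi x <= 1)
  (hsupp : forall x, (x < 1 \/ 2 < x) -> phi x = 0) :
  exists C T0 : R, 0 < C /\ 1 < T0 /\
    forall T : R, T0 <= T -> forall N : nat,
      sym_sum N (fun l => M_abs2 theta T (alpha * IZR l + beta) * phi (IZR l / T))
        <= C * T * ln T.
Proof.
  set (G := / (1 - exp (- (PI / (4 * alpha))))).
  assert (HG : 0 < G).
  { unfold G. apply Rinv_0_lt_compat. assert (exp (- (PI / (4 * alpha))) < 1).
    { rewrite <- exp_0. apply exp_increasing. pose proof PI_RGT_0.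
      assert (0 < PI / (4 * alpha)) by (apply Rdiv_lt_0_compat; lra). lra. } lra. }
  assert (Hia : 0 < / alpha) by (apply Rinv_0_lt_compat; lra).
  set (C1 := 3 * G + 32 / alpha + 4).
  assert (HC1 : 0 < C1) by (unfold C1; unfold Rdiv; lra).
  pose proof (exp_ineq1 1 ltac:(lra)) as He.
  exists (6 * C1), (exp 1). split; [lra|]. split; [lra|].
  intros T HT0 N.
  assert (HT : 1 < T) by lra.
  assert (HlnT : 1 <= ln T) by (rewrite <- (ln_exp 1); apply ln_le; lra).
  set (X := Rpower T theta).
  assert (HX1 : 1 <= X).
  { unfold X, Rpower. rewrite <- exp_0. apply exp_le. pose proof (lnT_pos T HT). nra. }
  assert (HXT : X <= T).
  { unfold X, Rpower. rewrite <- (exp_ln T) at 2 by lra. apply exp_le. pose proof (lnT_pos T HT). nra. }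
  assert (HXX : X * X <= T).
  { unfold X, Rpower. rewrite <- exp_plus.
    assert (exp (theta * ln T + theta * ln T) <= exp (ln T)) by (apply exp_le; pose proof (lnT_pos T HT); nra).
    rewrite exp_ln in H by lra. exact H. }
  set (M := Mlen theta T).
  pose proof (archimed X) as [Hu1 Hu2].
  assert (HMr : INR M = IZR (up X)).
  { unfold M, Mlen. fold X. rewrite INR_IZR_INZ, Z2Nat.id; auto. apply le_IZR. lra. }
  assert (HM : (1 <= M)%nat).
  { destruct M as [|m]; [|lia]. simpl in HMr. lra. }
  pose proof (archimed T) as [Ha1 Ha2]. pose proof (archimed (2 * T)) as [Hb1 Hb2].
  set (K := Z.to_nat (up (2 * T) - (up T - 1))).
  assert (HK : INR K <= T + 2).
  { unfold K. rewrite INR_IZR_INZ, Z2Nat.id. rewrite minus_IZR, minus_IZR. lra.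
    assert (IZR (up T - 1) <= IZR (up (2 * T))) by (rewrite minus_IZR; lra). apply le_IZR in H. lia. }
  eapply Rle_trans; [apply sym_reduce; eauto|].
  eapply Rle_trans; [apply (window_bound theta T alpha beta (up T - 1) K); auto; lra|].
  fold M.
  set (B := INR K * / (1 - exp (- (PI / (4 * alpha)))) + INR M * (8 * INR M / alpha + 2)).
  assert (HB : B <= C1 * T).
  { unfold B, C1. fold G.
    assert (INR M * (8 * INR M / alpha) <= 32 * T / alpha).
    { unfold Rdiv. assert (INR M * INR M <= 4 * T) by nra.
      replace (INR M * (8 * INR M * / alpha)) with (8 * (INR M * INR M) * / alpha) by ring. nra. }
    nra. }
  assert (HL : 1 + ln (INR M) <= 3 * ln T).
  { assert (ln (INR M) <= ln 2 + ln T).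
    { rewrite <- ln_mult by lra. apply ln_le; lra. }
    assert (ln 2 < 1).
    { rewrite <- (ln_exp 1). apply ln_increasing; lra. } lra. }
  assert (0 <= B).
  { unfold B. fold G. pose proof (pos_INR K). pose proof (pos_INR M).
    assert (0 <= 8 * INR M / alpha) by (unfold Rdiv; apply Rmult_le_pos; lra). nra. }
  assert (0 <= 1 + ln (INR M)).
  { assert (0 <= ln (INR M)) by (rewrite <- ln_1; apply ln_le; lra). lra. }
  apply Rle_trans with (2 * (C1 * T) * (3 * ln T)).
  { apply Rmult_le_compat; lra. }
  right; ring.
Qed.
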